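(* Let $G$ be a finite simple graph and let $2\leq k\leq\operatorname{mat}(G)$. If $M$ is a $k$-admissable matching of $G$, then either $M$ is a $(k-1)$-admissable matching, or there exists an edge $e\in M$ such that $M\setminus\{e\}$ is a $(k-1)$-admissable matching. Consequently, $\operatorname{aim}(G,k)\leq\operatorname{aim}(G,k-1)+1$.
   Context: $\operatorname{mat}(G)$ is the matching number. Two edges form a gap if they are disjoint and no edge of $G$ joins a vertex of one to a vertex of the other. A sequence $(a_1,\dots,a_n)$ of integers is $k$-admissable if $a_i\ge1$ and $\sum a_i\le n+k-1$. For $1\le k\le\operatorname{mat}(G)$, a matching $M$ is $k$-admissable if there are nonempty pairwise disjoint $M_1,\dots,M_r\subseteq M$ with union $M$ such that edges from different $M_i$'s always form a gap in $G$, $(|M_1|,\dots,|M_r|)$ is $k$-admissable, and the induced subgraph of $G$ on $\bigcup_{e\in M_i}e$ is a forest for each $i$. $\operatorname{aim}(G,k)$ is the maximum size of a $k$-admissable matching ($0$ if none). *)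

(* Defs.v *)
(* A finite simple graph on vertex type T is a symmetric,
   irreflexive relation e : rel T. Edges are 2-element vertex sets. *)
From mathcomp Require Import all_boot.
Set Implicit Arguments. Unset Strict Implicit. Unset Printing Implicit Defensive.

Section Graph.
Variables (T : finType) (e : rel T).

Definition is_edge (f : {set T}) : bool :=
  [exists x, exists y, (e x y) && (f == [set x; y])].

Definition matching (M : {set {set T}}) : bool :=
  [forall f in M, is_edge f] &&
  [forall f in M, forall g in M, (f != g) ==> [disjoint f & g]].

Definition mat : nat := \max_(M : {set {set T}} | matching M) #|M|.

Definition gap (f g : {set T}) : bool :=
  [disjoint f & g] && [forall x in f, forall y in g, ~~ e x y].

(* the induced subgraph G[S] is a forest: it has no cycle, i.e. no sequence
   of n >= 3 distinct vertices of S, consecutive ones adjacent and the last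
   adjacent to the first (such a sequence has at most #|T| vertices) *)
Definition induced_forest (S : {set T}) : bool :=
  [forall n : 'I_#|T|.+1, forall t : n.-tuple T,
     [&& uniq t, 2 < n & all (fun x => x \in S) t] ==> ~~ cycle e t].

Definition admissible_partition (k : nat) (M : {set {set T}})
    (P : {set {set {set T}}}) : bool :=
  [&& partition P M,
      [forall B1 in P, forall B2 in P, (B1 != B2) ==>
         [forall f in B1, forall g in B2, gap f g]],
      \sum_(B in P) #|B| <= #|P| + k - 1 &
      [forall B in P, induced_forest (\bigcup_(f in B) f)]].

Definition admissible (k : nat) (M : {set {set T}}) : bool :=
  [&& 1 <= k, k <= mat, matching M &
      [exists P, admissible_partition k M P]].

(* aim(G,k): maximum size of a k-admissable matching, 0 if none *)
Definition aim (k : nat) : nat :=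
  \max_(M : {set {set T}} | admissible k M) #|M|.

End Graph.

(* Main.v *)
Require Import Defs.
From mathcomp Require Import all_boot.
From mathcomp Require Import zify.

Section Helpers.
Variables (T : finType) (e : rel T).

Lemma forest_sub (S S' : {set T}) : S' \subset S ->
  induced_forest e S -> induced_forest e S'.
Proof.
move=> sub /forallP H; apply/forallP => n; apply/forallP => t.
have /forallP/(_ t)/implyP H1 := H n.
apply/implyP => /and3P[u n2 a]; apply: H1; rewrite u n2 /=.
by apply/allP => x xt; apply: (subsetP sub); exact: (allP a).
Qed.

Lemma matching_sub (M M' : {set {set T}}) : M' \subset M ->
  matching e M -> matching e M'.
Proof.
move=> sub /andP[/forallP H1 /forallP H2]; apply/andP; split.
  apply/forallP => f; apply/implyP => fM.
  by have /implyP := H1 f; apply; apply: (subsetP sub).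
apply/forallP => f; apply/implyP => fM.
have /implyP/(_ (subsetP sub _ fM))/forallP H := H2 f.
apply/forallP => g; apply/implyP => gM.
by have /implyP := H g; apply; apply: (subsetP sub).
Qed.

Lemma step k (M : {set {set T}}) P B f :
  admissible_partition e k M P -> B \in P -> f \in B -> 1 < #|B| ->
  \sum_(C in P) #|C| <= #|P| + k - 1 ->
  admissible_partition e k.-1 (M :\ f) [set C :\ f | C in P].
Proof.
move=> /and4P[/and3P[/eqP cov triv s0] gaps sum forest] BP fB cB _.
have disj := trivIsetP triv.
have fnot : forall C, C \in P -> C != B -> f \notin C.
  move=> C CP CB; apply/negP => fC.
  by have := disjointFr (disj _ _ CP BP CB) fC; rewrite fB.
have ne : forall C, C \in P -> C :\ f != set0.
  move=> C CP; case: (eqVneq C B) => [->|CB].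
    rewrite -card_gt0; move: cB; rewrite (cardsD1 f B) fB; lia.
  have : C != set0 by apply: contraNneq s0 => <-.
  case/set0Pn => x xC; apply/set0Pn; exists x; rewrite !inE xC andbT.
  by apply: contraNneq (fnot C CP CB) => <-.
have inj : {in P &, injective (fun C => C :\ f)}.
  move=> C1 C2 C1P C2P E; apply/eqP; apply/negP => /negP N.
  case/set0Pn: (ne C1 C1P) => x x1.
  have x2 : x \in C2 :\ f by rewrite -E.
  move: x1 x2; rewrite !inE => /andP[_ x1] /andP[_ x2].
  by have := disjointFr (disj _ _ C1P C2P N) x1; rewrite x2.
apply/and4P; split.
- apply/and3P; split.
  + apply/eqP/setP => x; rewrite -cov /cover; apply/bigcupP/idP.
      case=> C' /imsetP[C CP ->]; rewrite !inE => /andP[xf xC].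
      by rewrite xf /=; apply/bigcupP; exists C.
    rewrite !inE => /andP[xf /bigcupP[C CP xC]].
    by exists (C :\ f); [apply/imsetP; exists C | rewrite !inE xf].
  + apply/trivIsetP => C1' C2' /imsetP[C1 C1P ->] /imsetP[C2 C2P ->] N.
    have N' : C1 != C2 by apply: contraNneq N => ->.
    have := disj _ _ C1P C2P N'.
    by apply: disjointW; apply: subsetDl.
  + apply/imsetP => -[C CP E].
    by move: (ne C CP); rewrite -E eqxx.
- apply/forallP => C1'; apply/implyP => /imsetP[C1 C1P ->].
  apply/forallP => C2'; apply/implyP => /imsetP[C2 C2P ->].
  apply/implyP => N; have N' : C1 != C2 by apply: contraNneq N => ->.
  have /forallP/(_ C1)/implyP/(_ C1P)/forallP/(_ C2)/implyP/(_ C2P)/implyP/(_ N') H := gaps.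
  apply/forallP => g; apply/implyP => /setD1P[_ g1].
  apply/forallP => h; apply/implyP => /setD1P[_ h2].
  by have /forallP/(_ g)/implyP/(_ g1)/forallP/(_ h)/implyP/(_ h2) := H.
- rewrite big_imset // card_in_imset //.
  have h1 : \sum_(C in P) #|C| = #|B| + \sum_(C in P | C != B) #|C| := bigD1 B BP.
  have h2 : \sum_(C in P) #|C :\ f| = #|B :\ f| + \sum_(C in P | C != B) #|C :\ f| := bigD1 B BP.
  move: sum; rewrite h1 h2.
  have -> : \sum_(i in P | i != B) #|i :\ f| = \sum_(i in P | i != B) #|i|.
    apply: eq_bigr => C /andP[CP CB].
    by rewrite [in RHS](cardsD1 f C) (negbTE (fnot C CP CB)).
  rewrite (cardsD1 f B) fB add1n -subn1; move: (\sum_(C in P | C != B) #|C|) (#|B :\ f|) (#|P|) => s a p; lia.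
- apply/forallP => C'; apply/implyP => /imsetP[C CP ->].
  have /forallP/(_ C)/implyP/(_ CP) := forest; apply: forest_sub.
  apply/subsetP => x /bigcupP[g /setD1P[_ gC] xg].
  by apply/bigcupP; exists g.
Qed.

End Helpers.

Theorem lemma3p5 (T : finType) (e : rel T) (e_sym : symmetric e)
    (e_irr : irreflexive e) (k : nat) (hk2 : 2 <= k) (hkm : k <= mat e) :
  (forall M : {set {set T}}, admissible e k M ->
     admissible e k.-1 M \/
     exists2 f, f \in M & admissible e k.-1 (M :\ f)) /\
  aim e k <= aim e k.-1 + 1.
Proof.
have part1 : forall M : {set {set T}}, admissible e k M ->
     admissible e k.-1 M \/
     exists2 f, f \in M & admissible e k.-1 (M :\ f).
  move=> M /and4P[_ _ mM /existsP[P PA]].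
  have hk1 : 1 <= k.-1 by lia.
  have hkm1 : k.-1 <= mat e by lia.
  have PA' := PA; move: PA' => /and4P[pP gaps sum forest].
  case: (leqP (\sum_(B in P) #|B|) (#|P| + k.-1 - 1)) => hs.
    left; apply/and4P; split => //; apply/existsP; exists P.
    by apply/and4P; split.
  right.
  have [B BP cB] : exists2 B, B \in P & 1 < #|B|.
    apply/exists_inP; apply: contraLR hs => /exists_inPn H.
    rewrite -leqNgt; apply: (@leq_trans #|P|); last by lia.
    rewrite -sum1_card; apply: leq_sum => B BP; move: (H B BP); lia.
  have : 0 < #|B| by lia.
  rewrite card_gt0 => /set0Pn[f fB].
  have fM : f \in M.
    move/and3P: pP => [/eqP <- _ _]; apply/bigcupP; by exists B.
  exists f => //; apply/and4P; split => //.
    by apply: matching_sub mM; apply: subD1set.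
  by apply/existsP; exists [set C :\ f | C in P]; apply: step PA BP fB cB sum.
split => //.
apply/bigmax_leqP => M aM.
case: (part1 M aM) => [a1 | [f fM a1]].
  by apply: leq_trans _ (leq_addr 1 _); rewrite /aim; apply: leq_bigmax_cond.
rewrite (cardsD1 f M) fM addnC leq_add2r.
rewrite /aim; apply: leq_bigmax_cond a1.
Qed.
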